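(* Let $G\le\mathcal{S}_n$ and $a\in\mathcal{T}_n\setminus\mathcal{S}_n$, where the kernel of $a$ has type $\lambda$, and suppose $(a,G)$ is an $\mathcal{S}_n$-pair. Then (1) $G$ is $\operatorname{rank}(a)$-homogeneous; and (2) $G$ is $\lambda$-homogeneous.
   Context: $\Omega=\{1,\ldots,n\}$, $\mathcal{T}_n$ is the monoid of all maps $\Omega\to\Omega$, $\mathcal{S}_n$ the symmetric group. $\operatorname{rank}(a)=|\Omega a|$; the kernel of $a$ is the partition of $\Omega$ into the classes of $\{(x,y):xa=ya\}$, and its type is the non-increasing list of class sizes. $(a,G)$ is an $\mathcal{S}_n$-pair if $\langle a,G\rangle\setminus G=\langle a,\mathcal{S}_n\rangle\setminus\mathcal{S}_n$. $G$ is $k$-homogeneous if transitive on $k$-subsets of $\Omega$. For a partition $\lambda$ of $n$, $G$ is $\lambda$-homogeneous if for any two ordered partitions $(A_1,A_2,\ldots)$, $(B_1,B_2,\ldots)$ of $\Omega$ with $|A_i|=|B_i|=\lambda_i$ there is $g\in G$ mapping the set of parts $\{A_1,A_2,\ldots\}$ onto $\{B_1,B_2,\ldots\}$. *)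

(* Defs.v *)
From mathcomp Require Import all_boot all_fingroup.
Set Implicit Arguments. Unset Strict Implicit. Unset Printing Implicit Defensive.

(* Omega = 'I_n ; T_n = {ffun 'I_n -> 'I_n} ; S_n = {perm 'I_n}.
   Maps act on the right as in the paper: x (f g) = (x f) g. *)
Definition trans (n : nat) := {ffun 'I_n -> 'I_n}.

Definition ptr n (g : {perm 'I_n}) : trans n := [ffun x => g x].

Definition tcomp n (f g : trans n) : trans n := [ffun x => g (f x)].

Inductive gen n (X : trans n -> Prop) : trans n -> Prop :=
| gen_base x : X x -> gen X x
| gen_mul x y : gen X x -> gen X y -> gen X (tcomp x y).

Definition in_grp n (G : {set {perm 'I_n}}) (t : trans n) : Prop :=
  exists2 g, g \in G & t = ptr g.

Definition gens n (a : trans n) (G : {set {perm 'I_n}}) (t : trans n) : Prop :=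
  t = a \/ in_grp G t.

Definition Sn_pair n (a : trans n) (G : {set {perm 'I_n}}) : Prop :=
  forall t : trans n,
    (gen (gens a G) t /\ ~ in_grp G t) <->
    (gen (gens a [set: {perm 'I_n}]) t /\ ~ in_grp [set: {perm 'I_n}] t).

Definition rank n (a : trans n) : nat := #|[set a x | x in 'I_n]|.

Definition kernel n (a : trans n) : {set {set 'I_n}} := preim_partition a [set: 'I_n].
Definition ker_type n (a : trans n) : seq nat :=
  sort geq (map (fun B : {set 'I_n} => #|B|) (enum (kernel a))).

Definition k_homogeneous n (G : {set {perm 'I_n}}) (k : nat) : Prop :=
  forall A B : {set 'I_n}, #|A| = k -> #|B| = k ->
    exists2 g, g \in G & [set g x | x in A] = B.

Definition ord_partition n (lam : seq nat) (P : seq {set 'I_n}) : Prop :=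
  [/\ uniq P, partition [set:: P] [set: 'I_n] & map (fun A : {set 'I_n} => #|A|) P = lam].

Definition lam_homogeneous n (G : {set {perm 'I_n}}) (lam : seq nat) : Prop :=
  forall P Q : seq {set 'I_n}, ord_partition lam P -> ord_partition lam Q ->
    exists2 g, g \in G &
      [set [set g x | x in A] | A : {set 'I_n} in [set:: P]] = [set:: Q].

(* Main.v *)
Require Import Defs.
From mathcomp Require Import all_boot all_fingroup.
Set Implicit Arguments. Unset Strict Implicit. Unset Printing Implicit Defensive.

Local Open Scope group_scope.
Section Helpers.
Variable T : finType.

Lemma in_pim (h : {perm T}) (X : {set T}) z : (z \in h @: X) = (h^-1 z \in X).
Proof.
apply/imsetP/idP => [[w Hw ->]|H]; first by rewrite permK.
by exists (h^-1 z) => //; rewrite permKV.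
Qed.

Lemma pimM (p q : {perm T}) (X : {set T}) : (p * q) @: X = q @: (p @: X).
Proof. rewrite -imset_comp; apply: eq_imset => z /=; by rewrite permM. Qed.

Lemma pim1 (X : {set T}) : (1 : {perm T}) @: X = X.
Proof. rewrite -[RHS]imset_id; apply: eq_imset => z; by rewrite perm1. Qed.

Lemma pimpim (p q : {perm T}) (K : {set {set T}}) :
  [set p @: A | A : {set T} in [set q @: B | B : {set T} in K]] = [set (q * p) @: B | B : {set T} in K].
Proof. rewrite -imset_comp; apply: eq_imset => B /=; by rewrite pimM. Qed.

Lemma perm_move (X Y : {set T}) : #|X| = #|Y| ->
  exists h : {perm T}, h @: X = Y /\ forall z, z \notin X -> z \notin Y -> h z = z.
Proof.
move: {2}#|X :\: Y| (erefl #|X :\: Y|) => k.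
elim: k X => [|k IH] X Hk Hc.
  have sXY : X \subset Y by rewrite -setD_eq0 -cards_eq0 Hk.
  have eXY : X = Y by apply/eqP; rewrite eqEcard sXY Hc leqnn.
  by exists 1; split; [rewrite pim1 | move=> z _ _; rewrite perm1].
have [x Hx] : exists x, x \in X :\: Y.
  by apply/set0Pn; rewrite -cards_eq0 Hk.
have HYX : #|Y :\: X| = k.+1.
  have := cardsID Y X; have := cardsID X Y; rewrite setIC Hc => <-; rewrite -Hk.
  by move/eqP; rewrite eqn_add2l => /eqP.
have [y Hy] : exists y, y \in Y :\: X.
  by apply/set0Pn; rewrite -cards_eq0 HYX.
move: Hx Hy; rewrite !inE => /andP [nxY xX] /andP [nyX yY].
set X' := tperm x y @: X.
have HX' z : (z \in X') = (tperm x y z \in X) by rewrite /X' in_pim tpermV.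
have Hk' : #|X' :\: Y| = k.
  have -> : X' :\: Y = (X :\: Y) :\ x.
    apply/setP => z; rewrite !inE HX'.
    case: tpermP => [->|->|/eqP nzx /eqP nzy].
    - by rewrite eqxx (negbTE nyX) andbF.
    - by rewrite yY /=; rewrite andbF.
    - by rewrite (negbTE nzx) andbC.
    idtac.
  by move: Hk; rewrite (cardsD1 x) !inE nxY xX /= => [[]].
have Hc' : #|X'| = #|Y| by rewrite /X' card_imset //; exact: perm_inj.
have [h' [Hh' Fh']] := IH X' Hk' Hc'.
exists (tperm x y * h'); split; first by rewrite pimM.
move=> z zX zY; rewrite permM.
have nzx : x != z by apply: contraNneq zX => <-.
have nzy : y != z by apply: contraNneq zY => <-.
rewrite tpermD //; apply: Fh' => //; by rewrite HX' tpermD.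
Qed.

Fixpoint dseq (s : seq {set T}) : bool :=
  if s is A :: s' then all (fun C : {set T} => [disjoint A & C]) s' && dseq s' else true.

Lemma dseqP (s : seq {set T}) : uniq s ->
  (forall A B, A \in s -> B \in s -> A != B -> [disjoint A & B]) -> dseq s.
Proof.
elim: s => [//|A s IH] /= /andP [nAs us] H; apply/andP; split.
  apply/allP => C Cs; apply: H; rewrite ?inE ?eqxx ?Cs ?orbT //.
  by apply: contraNneq nAs => ->.
by apply: IH => // B C Bs Cs; apply: H; rewrite inE ?Bs ?Cs orbT.
Qed.

Lemma perm_lists (s1 s2 : seq {set T}) : dseq s1 -> dseq s2 ->
  map (fun A : {set T} => #|A|) s1 = map (fun A : {set T} => #|A|) s2 ->
  exists h : {perm T}, map (fun A : {set T} => h @: A) s1 = s2.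
Proof.
elim: s1 s2 => [|A s1 IH] [|B s2] //=; first by exists 1.
move=> /andP [dA d1] /andP [dB d2] [cAB cs].
have [h' Hh'] := IH s2 d1 d2 cs.
have cA : #|h' @: A| = #|B| by rewrite card_imset //; exact: perm_inj.
have [k [Hk Fk]] := perm_move cA.
exists (h' * k); congr (_ :: _); first by rewrite pimM.
rewrite -Hh'; apply/eq_in_map => C Cs /=.
rewrite pimM; set C' := h' @: C.
have C's : C' \in s2 by rewrite -Hh'; apply: map_f.
have dC'B : [disjoint B & C'] by move/allP: dB; apply.
have dC'A : [disjoint h' @: A & C'].
  rewrite -setI_eq0 -imsetI; last by move=> ? ? _ _; apply: perm_inj.
  rewrite imset_eq0 setI_eq0; by move/allP: dA; apply.
rewrite -[RHS]imset_id; apply: eq_in_imset => z zC.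
by apply: Fk; rewrite ?(disjointFl dC'A zC) ?(disjointFl dC'B zC).
Qed.
End Helpers.

Section Main.
Variables (n : nat) (G : {group {perm 'I_n}}) (a : trans n).

Lemma gen_img t : gen (gens a G) t ->
  in_grp G t \/ exists2 v, v \in G & forall x, exists y, t x = v (a y).
Proof.
elim => [x [->|Hx] | x y _ IHx _ IHy].
- by right; exists 1; [exact: group1 | move=> z; exists z; rewrite perm1].
- by left.
- case: IHy => [[g Hg ->]|[v Hv Hy]].
  + case: IHx => [[g' Hg' ->]|[v Hv Hx]].
    * left; exists (g' * g); first by rewrite groupM.
      by apply/ffunP => z; rewrite !ffunE permM.
    * right; exists (v * g); first by rewrite groupM.
      move=> z; case: (Hx z) => w Hw; exists w.
      by rewrite /tcomp /ptr !ffunE Hw permM.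
  + by right; exists v => // z; rewrite /tcomp ffunE; apply: Hy.
Qed.

Lemma gen_ker t : gen (gens a G) t ->
  in_grp G t \/ exists2 v, v \in G & forall x y, a (v x) = a (v y) -> t x = t y.
Proof.
elim => [x [->|Hx] | x y _ IHx _ IHy].
- by right; exists 1; [exact: group1 | move=> z w; rewrite !perm1].
- by left.
- case: IHx => [[g Hg ->]|[v Hv Hx]].
  + case: IHy => [[g' Hg' ->]|[v Hv Hy]].
    * left; exists (g * g'); first by rewrite groupM.
      by apply/ffunP => z; rewrite !ffunE permM.
    * right; exists (g * v); first by rewrite groupM.
      move=> z w E; rewrite /tcomp /ptr !ffunE; apply: Hy; by rewrite -!permM.
  + right; exists v => // z w E; rewrite /tcomp !ffunE; by rewrite (Hx _ _ E).
Qed.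

Lemma inj_grp : injective a -> in_grp [set: {perm 'I_n}] a.
Proof.
move=> Ha; exists (perm Ha); first by rewrite inE.
by apply/ffunP => x; rewrite /ptr ffunE permE.
Qed.

Hypothesis Ha : ~ in_grp [set: {perm 'I_n}] a.
Hypothesis Hp : Sn_pair a G.

Lemma pair_mem t : gen (gens a [set: {perm 'I_n}]) t ->
  (injective t -> injective a) -> gen (gens a G) t /\ ~ in_grp G t.
Proof.
move=> Hg Hinj; apply (proj2 (Hp t)); split=> //.
case=> g _ Ht; apply: Ha; apply: inj_grp; apply: Hinj.
by rewrite Ht => x y; rewrite /ptr !ffunE; apply: perm_inj.
Qed.

Definition Im := [set a x | x in 'I_n].

Lemma part1_aux (C : {set 'I_n}) : #|C| = #|Im| ->
  exists2 v, v \in G & v @: Im = C.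
Proof.
move=> HC; have [g [Hg _]] := perm_move (esym HC).
set t := tcomp a (ptr g).
have Hgen : gen (gens a [set: {perm 'I_n}]) t.
  apply: gen_mul; apply: gen_base; [by left | by right; exists g; rewrite ?inE].
have Hinj : injective t -> injective a.
  by move=> Ht x y E; apply: Ht; rewrite /t /tcomp /ptr !ffunE E.
have [Hgt Hnt] := pair_mem Hgen Hinj.
case: (gen_img Hgt) => [//|[v Hv Hvi]].
exists v => //; apply/esym/eqP; rewrite eqEcard card_imset; last exact: perm_inj.
rewrite -HC leqnn andbT; apply/subsetP => z.
rewrite -Hg => /imsetP [w /imsetP [x _ ->] ->].
case: (Hvi x) => y; rewrite /t /tcomp /ptr !ffunE => ->.
by apply: imset_f; apply: imset_f.
Qed.

Lemma part1 : k_homogeneous G (rank a).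
Proof.
move=> A B HA HB.
have [v1 Hv1 E1] := part1_aux HA.
have [v2 Hv2 E2] := part1_aux HB.
exists (v1^-1 * v2); first by rewrite groupM ?groupV.
by rewrite -E1 -pimM mulgA mulgV mul1g.
Qed.


Lemma ker_conv (m : {perm 'I_n}) :
  (forall z z', a (m z) = a (m z') -> a z = a z') ->
  forall z z', a z = a z' -> a (m z) = a (m z').
Proof.
move=> H.
pose phi y := a (odflt y [pick x | a (m x) == y]).
have Hphi x : phi (a (m x)) = a x.
  rewrite /phi; case: pickP => [x' /eqP E | /(_ x)]; last by rewrite eqxx.
  by apply: H.
have Hinj : {in Im &, injective phi}.
  apply/imset_injP; suff -> : phi @: Im = Im by [].
  apply/eqP; rewrite eqEsubset; apply/andP; split; apply/subsetP => y.
    case/imsetP => w /imsetP [x _ ->] ->.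
    by rewrite -[x](permKV m) Hphi; apply: imset_f.
  case/imsetP => x _ ->; rewrite -Hphi; apply: imset_f; apply: imset_f; done.
move=> z z' E; apply: Hinj; rewrite ?Hphi //; apply: imset_f; rewrite ?inE //.
Qed.

Lemma Kpres (m : {perm 'I_n}) :
  (forall z z', (a (m z) == a (m z')) = (a z == a z')) ->
  [set m @: B | B : {set 'I_n} in kernel a] = kernel a.
Proof.
move=> H; rewrite /kernel /preim_partition /equivalence_partition -imset_comp.
have E x : m @: [set y in [set: 'I_n] | a x == a y] = [set y in [set: 'I_n] | a (m x) == a y].
  apply/setP => y; rewrite in_pim !inE -{2}(permKV m y) H //.
under eq_imset => x do rewrite /= E.
apply/setP => B; apply/imsetP/imsetP => [[x _ ->]|[x _ ->]].
  by exists (m x); rewrite ?inE.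
by exists (m^-1 x); rewrite ?inE ?permKV.
Qed.


Lemma part2_aux (P : seq {set 'I_n}) : ord_partition (ker_type a) P ->
  exists2 v, v \in G & [set v @: B | B : {set 'I_n} in kernel a] = [set:: P].
Proof.
case=> uP pP cP.
set K := kernel a.
set s1 := sort (relpre (fun B : {set 'I_n} => #|B|) geq) (enum K).
have c1 : map (fun B : {set 'I_n} => #|B|) s1 = map (fun B : {set 'I_n} => #|B|) P.
  by rewrite cP /ker_type sort_map.
have d1 : dseq s1.
  apply: dseqP; first by rewrite sort_uniq enum_uniq.
  have := preim_partitionP a [set: 'I_n]; case/and3P => _ tK _.
  move/trivIsetP: tK => tK A B; rewrite !mem_sort !mem_enum; exact: tK.
have d2 : dseq P.
  apply: dseqP => //; case/and3P: pP => _ tP _.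
  move/trivIsetP: tP => tP A B HA HB; apply: tP; by rewrite inE.
have [h Hh] := perm_lists d1 d2 c1.
have HhK : [set h @: B | B : {set 'I_n} in K] = [set:: P].
  apply/setP => C; rewrite inE -Hh.
  apply/imsetP/mapP => [[B HB ->]|[B HB ->]]; exists B => //;
    by move: HB; rewrite ?mem_sort ?mem_enum.
set t := tcomp (ptr h^-1) a.
have Hgen : gen (gens a [set: {perm 'I_n}]) t.
  apply: gen_mul; apply: gen_base; [by right; exists h^-1; rewrite ?inE | by left].
have Hinj : injective t -> injective a.
  move=> Ht x y E; apply: (@perm_inj _ h); apply: Ht.
  by rewrite /t /tcomp /ptr !ffunE !permK E.
have [Hgt Hnt] := pair_mem Hgen Hinj.
case: (gen_ker Hgt) => [//|[v0 Hv0 Hk]].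
pose m := h * v0.
have H1 z z' : a (m z) = a (m z') -> a z = a z'.
  move=> E; have := Hk (h z) (h z'); rewrite -!permM => /(_ E).
  by rewrite /t /tcomp /ptr !ffunE !permK.
have H2 z z' : (a (m z) == a (m z')) = (a z == a z').
  by apply/eqP/eqP; [apply: H1 | move=> E; exact: (@ker_conv m H1 z z' E)].
exists v0^-1; first by rewrite groupV.
by rewrite -HhK /K -[in LHS](Kpres H2) pimpim /m -mulgA mulgV mulg1.
Qed.

Lemma part2 : lam_homogeneous G (ker_type a).
Proof.
move=> P Q HP HQ.
have [v1 Hv1 E1] := part2_aux HP.
have [v2 Hv2 E2] := part2_aux HQ.
exists (v1^-1 * v2); first by rewrite groupM ?groupV.
by rewrite -E1 pimpim mulgA mulgV mul1g.
Qed.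

End Main.

Local Close Scope group_scope.

Theorem lemma5p1 (n : nat) (G : {group {perm 'I_n}}) (a : trans n) :
  ~ in_grp [set: {perm 'I_n}] a ->
  Sn_pair a G ->
  k_homogeneous G (rank a) /\ lam_homogeneous G (ker_type a).
Proof. by move=> Ha Hp; split; [exact: part1 | exact: part2]. Qed.
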